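(* Let $X$ be a Peano continuum and $f:X\to X$ a cw-expansive homeomorphism with cw-expansivity constant $\alpha>0$. Then a point $x\in X$ is a sink if and only if $CW^s_{\alpha/2}(x)$ is a neighborhood of $x$.
   Context: A Peano continuum is a compact, connected, locally connected metric space $(X,d)$ with more than one point. A homeomorphism $f:X\to X$ of a compact metric space is continuum-wise expansive (cw-expansive) with cw-expansivity constant $\alpha>0$ if $\sup_{n\in\mathbb Z}\operatorname{diam} f^n(C)>\alpha$ for every continuum $C\subset X$ containing more than one point. For $\varepsilon>0$ and $x\in X$: $W^s_\varepsilon(x)=\{y\in X:\ d(f^n(x),f^n(y))\le\varepsilon \text{ for all } n\ge 0\}$; $CW^s_\varepsilon(x)$ is the connected component of $W^s_\varepsilon(x)$ containing $x$; $W^s(x)=\{y\in X:\ d(f^n(x),f^n(y))\to 0 \text{ as } n\to\infty\}$. A point $x$ is a weak sink if $W^s_\varepsilon(x)$ is a neighborhood of $x$ for every $\varepsilon>0$; $x$ is a sink if it is a weak sink and there exists $\varepsilon>0$ with $W^s_\varepsilon(x)\subset W^s(x)$. (Sinks are not required to be periodic.) *)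

(* Defs.v *)
From HB Require Import structures.
From mathcomp Require Import all_boot all_order all_algebra.
From mathcomp Require Import all_classical all_reals all_analysis.
Set Implicit Arguments. Unset Strict Implicit. Unset Printing Implicit Defensive.
Import Order.TTheory GRing.Theory Num.Theory numFieldNormedType.Exports.
Local Open Scope classical_set_scope.
Local Open Scope ring_scope.

Section Defs.
Context {R : realType} {X : metricType R}.

Definition locally_connected_space : Prop :=
  forall (x : X) (U : set X), nbhs x U ->
    exists V : set X, [/\ open V, connected V, V x & V `<=` U].

Definition more_than_one_point (A : set X) : Prop :=
  exists x y, [/\ A x, A y & x <> y].

Definition peano_continuum : Prop :=
  [/\ compact [set: X], connected [set: X], locally_connected_space
    & more_than_one_point [set: X]].

Definition continuum (C : set X) : Prop :=
  [/\ C !=set0, compact C & connected C].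

Definition homeomorphism (f : X -> X) : Prop :=
  exists g : X -> X, [/\ cancel f g, cancel g f, continuous f & continuous g].

Definition diam (A : set X) : \bar R :=
  ereal_sup [set z | exists x y, [/\ A x, A y & z = (mdist x y)%:E]].

(* image of A under f^n, n an integer; for negative n, f^n(A) is the preimage
   of A under f^(-n) (this is f^n(A) when f is bijective) *)
Definition zimage (f : X -> X) (n : int) (A : set X) : set X :=
  match n with
  | Posz k => iter k f @` A
  | Negz k => iter k.+1 f @^-1` A
  end.

Definition cw_expansive (f : X -> X) (alpha : R) : Prop :=
  forall C : set X, continuum C -> more_than_one_point C ->
    (alpha%:E < ereal_sup (range (fun n : int => diam (zimage f n C))))%E.

Definition Ws_eps (f : X -> X) (eps : R) (x : X) : set X :=
  [set y | forall n : nat, mdist (iter n f x) (iter n f y) <= eps].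

Definition CWs_eps (f : X -> X) (eps : R) (x : X) : set X :=
  connected_component (Ws_eps f eps x) x.

Definition Ws (f : X -> X) (x : X) : set X :=
  [set y | (fun n : nat => mdist (iter n f x) (iter n f y)) @ \oo --> (0 : R)].

Definition weak_sink (f : X -> X) (x : X) : Prop :=
  forall eps : R, 0 < eps -> nbhs x (Ws_eps f eps x).

Definition sink (f : X -> X) (x : X) : Prop :=
  weak_sink f x /\ exists2 eps : R, 0 < eps & Ws_eps f eps x `<=` Ws f x.

End Defs.

(* Main.v *)
Require Import Defs.
From HB Require Import structures.
From mathcomp Require Import all_boot all_order all_algebra.
From mathcomp Require Import all_classical all_reals all_analysis.
From mathcomp Require Import lra.
Import Order.TTheory GRing.Theory Num.Theory numFieldNormedType.Exports.
Local Open Scope classical_set_scope.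
Local Open Scope ring_scope.

Section Aux.
Context {R : realType} {X : metricType R}.
Local Notation d := (@mdist R X).

Lemma iter_cont (f : X -> X) n : continuous f -> continuous (iter n f).
Proof.
move=> cf; elim: n => [|n IH] x /=; first exact: cvg_id.
exact: (continuous_comp (IH x) (cf _)).
Qed.

Lemma iter_cancel (f g : X -> X) k : cancel f g -> cancel (iter k f) (iter k g).
Proof.
move=> fK w; elim: k w => // k IH w.
by rewrite iterSr iterS fK IH.
Qed.

Lemma nbhs_dist (h : X -> X) z eta : {for z, continuous h} -> 0 < eta ->
  nbhs z [set y | d (h z) (h y) < eta].
Proof.
move=> hc eta0.
exact: (metricType_numDomainType.cvgr_dist_lt hc eta0).
Qed.

Lemma cluster_ex (I : Type) (D : set I) (B : I -> set X) :
  compact [set: X] -> (exists i, D i) ->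
  (forall i j, D i -> D j -> exists2 k, D k & B k `<=` B i `&` B j) ->
  (forall i, D i -> B i !=set0) ->
  exists p : X, forall i, D i -> forall W, nbhs p W -> B i `&` W !=set0.
Proof.
move=> cpt Dne dir ne.
have FF := filter_from_filter Dne dir.
have PF := filter_from_proper FF ne.
have [p [_ cl]] := cpt _ PF (filterT).
by exists p => i Di W pW; apply: cl => //; exists i.
Qed.

Lemma conn_split (E U V : set X) : connected E -> open U -> open V ->
  U `&` V = set0 -> E `<=` U `|` V -> E `&` U !=set0 -> E `&` V !=set0 -> False.
Proof.
move=> cE oU oV UV EUV EU [z [Ez Vz]].
have h : E `&` U = E.
  apply: cE => //; first by exists U.
  exists (~` V); first exact: open_closedC.
  apply/seteqP; split => w [Ew Hw]; split => //.
    by move=> Vw; have : (U `&` V) w by []; rewrite UV.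
  by case: (EUV _ Ew).
have : (U `&` V) z by split => //; rewrite -h in Ez; case: Ez.
by rewrite UV.
Qed.


Lemma nbhs_mball {z : X} {r} : 0 < r -> nbhs z [set w | d z w < r].
Proof.
move=> r0; rewrite -metricType_numDomainType.filter_from_mdist_nbhs.
by exists r.
Qed.

Lemma sep_closed (L A B : set X) : closed L -> L = A `|` B -> separated A B ->
  closed A.
Proof.
move=> cL LAB [s1 s2] z clAz.
have Lz : L z by apply: cL; apply: (closureS _ clAz); rewrite LAB => w Aw; left.
rewrite LAB in Lz; case: Lz => // Bz.
have : (closure A `&` B) z by [].
by rewrite s1.
Qed.

Arguments iter_cont {f} n.
Arguments iter_cancel {f g} k.
Arguments nbhs_dist {h z eta}.
Arguments sep_closed {L A B}.

Lemma key (f g : X -> X) (alpha : R) (x : X) (V : set X) :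
  compact [set: X] -> cancel f g -> cancel g f -> continuous f -> continuous g ->
  0 < alpha -> cw_expansive f alpha -> connected V -> V x ->
  V `<=` Ws_eps f (alpha/2) x ->
  forall e, 0 < e -> exists N, forall n, (N <= n)%N -> forall y, V y ->
    d (iter n f x) (iter n f y) <= e.
Proof.
move=> cpt fK gK cf cg a0 cw cV Vx VW e e0.
apply: contrapT => H.
have hS : forall N, exists n y,
    [/\ (N <= n)%N, V y & e < d (iter n f x) (iter n f y)].
  move=> N; apply: contrapT => hN; apply: H; exists N => n Nn y Vy.
  rewrite leNgt; apply/negP => lt; apply: hN; by exists n, y.
pose B1 (N : nat) := [set iter n f x | n in [set n | (N <= n)%N /\
   exists y, V y /\ e < d (iter n f x) (iter n f y)]].
have [p Hp] : exists p : X, forall i, setT i -> forall W, nbhs p W ->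
    B1 i `&` W !=set0.
  apply: (@cluster_ex _ setT B1 cpt (ex_intro _ 0%N I)).
- move=> i j _ _; exists (maxn i j) => // _ [n [Nn Hy] <-].
  by split; exists n => //; split => //; apply: leq_trans Nn;
    rewrite ?leq_maxl ?leq_maxr.
- move=> N _; have [n [y [Nn Vy lt]]] := hS N.
  by exists (iter n f x); exists n => //; split => //; exists y.
have hp : forall N W, nbhs p W -> exists n, [/\ (N <= n)%N,
    (exists y, V y /\ e < d (iter n f x) (iter n f y)) & W (iter n f x)].
  move=> N W pW; have [_ [[n [Nn Hy] <-] Wn]] := Hp N I W pW.
  by exists n.
pose D2 := [set i : nat * set X | nbhs p i.2].
pose B2 (i : nat * set X) := [set z | exists n y, [/\ (i.1 <= n)%N,
   i.2 (iter n f x), V y, z = iter n f y & e < d (iter n f x) z]].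
have D2ne : exists i, D2 i by exists (0%N, setT); exact: filterT.
have [q hq] : exists q : X, forall i, D2 i -> forall W, nbhs q W ->
    B2 i `&` W !=set0.
  apply: (@cluster_ex _ D2 B2 cpt D2ne).
- move=> [i1 W1] [i2 W2] /= h1 h2; exists (maxn i1 i2, W1 `&` W2).
    exact: filterI.
  move=> z [n [y [/= Nn [W1n W2n] Vy -> lt]]].
  by split; exists n, y; split => //; apply: leq_trans Nn;
    rewrite ?leq_maxl ?leq_maxr.
- move=> [N W] /= pW; have [n [Nn [y [Vy lt]] Wn]] := hp N W pW.
  by exists (iter n f y), n, y.
pose L : set X := [set z : X | forall N W U, nbhs p W -> nbhs z U -> exists n y,
   [/\ (N <= n)%N, W (iter n f x), V y & U (iter n f y)]].
have Lp : L p.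
  move=> N W U pW pU; have [n [Nn _ [Wn Un]]] := hp N (W `&` U) (filterI pW pU).
  by exists n, x.
have Lq : L q.
  move=> N W U pW qU.
  have [z [[n [y [Nn Wn Vy -> _]]] Uz]] := hq (N, W) pW U qU.
  by exists n, y.
have pq : p <> q.
  move=> epq; rewrite -epq in hq.
  have e20 : 0 < e / 2 by rewrite divr_gt0.
  have [z [[n [y [_ Wn _ -> lt]]] Uz]] :=
    hq (0%N, [set w | d p w < e / 2]) (nbhs_mball e20) _ (nbhs_mball e20).
  move: Wn Uz lt => /= Wn Uz lt.
  have := metric_triangle (iter n f x) p (iter n f y).
  rewrite metric_sym in Wn; lra.
have Lclosed : closed L.
  move=> z clz N W U pW zU.
  have [z' [Lz' Uz']] := clz _ (nbhs_interior zU).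
  exact: Lz' N W U pW Uz'.
have Lconn : connected L.
  apply: contrapT => /connectedPn [E [E0 LE sep]].
  have [b Ebp] : exists b, E b p.
    by move: Lp; rewrite LE => -[]; [exists false|exists true].
  have LAB : L = E b `|` E (~~ b).
    by move: LE; case: b {Ebp} => //= ->; rewrite setUC.
  have sepAB : separated (E b) (E (~~ b)).
    by move: sep; case: b {Ebp LAB} => //=; rewrite separatedC.
  have clA := sep_closed Lclosed LAB sepAB.
  have clB : closed (E (~~ b)).
    by apply: (sep_closed Lclosed _ _); [rewrite setUC; exact: LAB|
      rewrite separatedC].
  have [U [Vo [oU oVo AU BVo UV0]]] :=
    (@normal_openP R X).1 (compact_normal (@metric_hausdorff _ X) cpt)
      _ _ clA clB (separated_disjoint sepAB).
  have [b0 Bb0] := E0 (~~ b).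
  pose B3 (i : nat * set X) := [set z | exists n y, [/\ (i.1 <= n)%N,
     i.2 (iter n f x), V y, z = iter n f y & ~ (U z \/ Vo z)]].
  have [r hr] : exists r : X, forall i, D2 i -> forall W, nbhs r W ->
      B3 i `&` W !=set0.
    apply: (@cluster_ex _ D2 B3 cpt D2ne).
  - move=> [i1 W1] [i2 W2] /= h1 h2; exists (maxn i1 i2, W1 `&` W2).
      exact: filterI.
    move=> z [n [y [/= Nn [W1n W2n] Vy -> lt]]].
    by split; exists n, y; split => //; apply: leq_trans Nn;
      rewrite ?leq_maxl ?leq_maxr.
  - move=> [N W] /= pW.
    have LB0 : L b0 by rewrite LAB; right.
    have pU : nbhs p U by apply: open_nbhs_nbhs; split => //; apply: AU.
    have b0V : nbhs b0 Vo by apply: open_nbhs_nbhs; split => //; apply: BVo.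
    have [n [y [Nn [Wn Un] Vy Vn]]] := LB0 N (W `&` U) Vo (filterI pW pU) b0V.
    have [z [[y' Vy' <-] nz]] :
        exists z, (iter n f @` V) z /\ ~ (U z \/ Vo z).
      apply: contrapT => hc.
      apply: (@conn_split (iter n f @` V) U Vo _ oU oVo UV0).
      + apply: connected_continuous_connected cV _.
        exact: continuous_subspaceT (iter_cont n cf).
      + move=> z Ez; apply: contrapT => nz; apply: hc; exists z; split => //.
      + by exists (iter n f x); split => //; exists x.
      + by exists (iter n f y); split => //; exists y.
    by exists (iter n f y'), n, y'.
  have Lr : L r.
    move=> N W U' pW rU'.
    have [z [[n [y [Nn Wn Vy -> _]]] U'z]] := hr (N, W) pW U' rU'.
    by exists n, y.
  have : U r \/ Vo r by rewrite LAB in Lr; case: Lr => [/AU|/BVo]; [left|right].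
  case => [Ur|Vr].
  - have [z [[n [y [_ _ _ -> nz]]] Uz]] :=
      hr (0%N, setT) filterT U (open_nbhs_nbhs (conj oU Ur)).
    by apply: nz; left.
  - have [z [[n [y [_ _ _ -> nz]]] Uz]] :=
      hr (0%N, setT) filterT Vo (open_nbhs_nbhs (conj oVo Vr)).
    by apply: nz; right.
have bound : forall (h : X -> X) m0, continuous h ->
    (forall n, (m0 <= n)%N -> forall y, V y ->
       d (h (iter n f x)) (h (iter n f y)) <= alpha / 2) ->
    forall z, L z -> d (h z) (h p) <= alpha / 2.
  move=> h m0 hc hb z Lz; rewrite leNgt; apply/negP => lt.
  pose eta := (d (h z) (h p) - alpha / 2) / 2.
  have eta0 : 0 < eta by rewrite divr_gt0 // subr_gt0.
  have [n [y [Nn Wn Vy Un]]] :=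
    Lz m0 _ _ (nbhs_dist (hc p) eta0) (nbhs_dist (hc z) eta0).
  move: Wn Un => /= Wn Un.
  have := hb n Nn y Vy.
  have t1 := metric_triangle (h z) (h (iter n f y)) (h p).
  have t2 := metric_triangle (h (iter n f y)) (h (iter n f x)) (h p).
  rewrite (metric_sym (h (iter n f y)) (h (iter n f x))) (metric_sym (h (iter n f x)) (h p)) in t2.
  rewrite /eta in Wn Un. lra.
have cont : continuum L.
  split; [by exists p | exact: subclosed_compact Lclosed cpt (subsetT _) | by []].
have mo : more_than_one_point L by exists p, q; split.
have := cw L cont mo.
suff Hs : (ereal_sup (range (fun n : int => diam (zimage f n L))) <= alpha%:E)%E.
  by rewrite ltNge Hs.
apply: ge_ereal_sup => _ [j _ <-].
apply: ge_ereal_sup => _ [a [b [Ha Hb ->]]].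
rewrite lee_fin.
case: j Ha Hb => k /= Ha Hb.
- have bk := bound (iter k f) 0%N (iter_cont k cf).
  have bk' : forall z, L z -> d (iter k f z) (iter k f p) <= alpha / 2.
    apply: bk => n _ y Vy; rewrite -!iterD; exact: VW Vy (k + n)%N.
  case: Ha => za Lza <-; case: Hb => zb Lzb <-.
  have := metric_triangle (iter k f za) (iter k f p) (iter k f zb).
  have := bk' _ Lza; have := bk' _ Lzb.
  have := metric_sym (iter k f zb) (iter k f p); lra.
- have bk := bound (iter k.+1 g) k.+1 (iter_cont k.+1 cg).
  have bk' : forall z, L z -> d (iter k.+1 g z) (iter k.+1 g p) <= alpha / 2.
    apply: bk => n kn y Vy; rewrite -(subnKC kn) !iterD !iter_cancel //.
    exact: VW Vy _.
  have -> : a = iter k.+1 g (iter k.+1 f a) by rewrite iter_cancel.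
  have -> : b = iter k.+1 g (iter k.+1 f b) by rewrite iter_cancel.
  have := metric_triangle (iter k.+1 g (iter k.+1 f a)) (iter k.+1 g p)
    (iter k.+1 g (iter k.+1 f b)).
  have := bk' _ Ha; have := bk' _ Hb.
  have := metric_sym (iter k.+1 g (iter k.+1 f b)) (iter k.+1 g p); lra.
Qed.

End Aux.

Arguments iter_cont {R X f} n.
Arguments nbhs_dist {R X h z eta}.

Theorem mainTheorem5 (R : realType) (X : metricType R) (f : X -> X) (alpha : R) :
  @peano_continuum R X -> homeomorphism f -> 0 < alpha -> cw_expansive f alpha ->
  forall x : X, sink f x <-> nbhs x (CWs_eps f (alpha / 2) x).
Proof.
move=> [cpt _ lc _] [g [fK gK cf cg]] a0 cw x; split.
- move=> [ws _].
  have a20 : 0 < alpha / 2 by rewrite divr_gt0.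
  have [V [oV cV Vx VW]] := lc x _ (ws _ a20).
  apply: (filterS _ (open_nbhs_nbhs (conj oV Vx))).
  exact: connected_component_max.
- move=> hN.
  have [V [oV cV Vx VC]] := lc x _ hN.
  have VW : V `<=` Ws_eps f (alpha / 2) x.
    by move=> y /VC; apply: connected_component_sub.
  have K := @key R X f g alpha x V cpt fK gK cf cg a0 cw cV Vx VW.
  have nV : nbhs x V := open_nbhs_nbhs (conj oV Vx).
  split.
  + move=> eps eps0; have [N HN] := K eps eps0.
    have fin : forall M, nbhs x [set y | forall n, (n < M)%N ->
        mdist (iter n f x) (iter n f y) <= eps].
      elim=> [|M IH].
        by apply: filterS (filterT : nbhs x setT) => y _ n.
      apply: (filterS _ (filterI IH (nbhs_dist (iter_cont M cf x) eps0))).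
      move=> y [H1 H2] n; rewrite ltnS leq_eqVlt => /orP [/eqP -> |nM].
        exact: ltW.
      exact: H1.
    apply: (filterS _ (filterI (fin N) nV)) => y [H1 Vy] n.
    case: (ltnP n N) => nN; first exact: H1.
    exact: HN.
  + rewrite -metricType_numDomainType.filter_from_mdist_nbhs in nV.
    case: nV => r r0 rV.
    exists (r / 2); first by rewrite divr_gt0.
    move=> y Wy.
    have Vy : V y.
      apply: rV => /=; have := Wy 0%N => /= h.
      by apply: (le_lt_trans h); rewrite ltr_pdivrMr // ltr_pMr // ltr1n.
    apply/cvgrPdist_le => e e0.
    have [N HN] := K e e0.
    exists N => // n /= Nn.
    by rewrite sub0r normrN ger0_norm ?mdist_ge0 //; apply: HN.
Qed.
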